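(* Let $K:\ell^2\to\mathcal{H}$ be a bounded, linear and injective operator into a real Hilbert space $\mathcal{H}$, let $f\in\mathcal{H}$, let $w=(w_k)_{k\in\mathbb{N}}$ be a sequence with $w_k\ge w_0>0$ for all $k$, and fix $\gamma>0$. Let $\bar u\in\ell^2$ be the unique minimizer of $\Psi(u)=\frac12\|Ku-f\|_{\mathcal{H}}^2+\sum_{k=1}^\infty w_k|u_k|$ over $\ell^2$. Define $\mathcal{F}:\ell^2\to\ell^2$ by $\mathcal{F}(u)=u-\mathcal{S}_{\gamma w}(u-\gamma K^*(Ku-f))$, and for $u\in\ell^2$ let $\mathcal{A}(u)=\{k\in\mathbb{N}: |u-\gamma K^*(Ku-f)|_k>\gamma w_k\}$, $P_{\mathcal{A}(u)}$ the coordinate projection onto the indices in $\mathcal{A}(u)$, and $\mathcal{G}(u)=(I-P_{\mathcal{A}(u)})+\gamma P_{\mathcal{A}(u)}K^*K\in L(\ell^2,\ell^2)$. Let $\rho>0$ and $k_0\in\mathbb{N}$ be such that $\|u-\bar u\|<\rho$ implies $\mathcal{A}(u)\subset\{1,\dots,k_0\}$ (such $\rho,k_0$ exist). Then there exists $r\in(0,\rho]$ such that for every $u^0\in\ell^2$ with $\|u^0-\bar u\|<r$, the semismooth Newton iteration $u^{n+1}=u^n-\mathcal{G}(u^n)^{-1}\mathcal{F}(u^n)$, $n=0,1,2,\dots$, is well defined, all iterates satisfy $\|u^n-\bar u\|<r$, and $u^n\to\bar u$ superlinearly, i.e. $\|u^{n+1}-\bar u\|=o(\|u^n-\bar u\|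)$.
   Context: $\ell^2$ is the Hilbert space of real square-summable sequences with norm $\|\cdot\|$; $K^*$ is the Hilbert space adjoint of $K$. For a sequence $v=(v_k)$ with $v_k>0$, the soft-thresholding operator is $\mathcal{S}_{v}(u)_k=\max\{0,|u_k|-v_k\}\,\mathrm{sgn}(u_k)$; $\gamma w$ denotes the sequence $(\gamma w_k)$. $|x|_k$ denotes $|x_k|$. *)

(* Defs.v *)
From Stdlib Require Import Reals Lra.
From Coquelicot Require Import Coquelicot.
Open Scope R_scope.

(** Real sequences, indexed by nat (index 0 plays the role of the paper's 1). *)
Definition seqR := nat -> R.

Definition in_l2 (u : seqR) : Prop := ex_series (fun k => (u k) ^ 2).
Definition l2norm (u : seqR) : R := sqrt (Series (fun k => (u k) ^ 2)).

Definition sadd (u v : seqR) : seqR := fun k => u k + v k.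
Definition ssub (u v : seqR) : seqR := fun k => u k - v k.
Definition sscal (a : R) (u : seqR) : seqR := fun k => a * u k.

Definition unitv (k : nat) : seqR := fun j => if Nat.eq_dec j k then 1 else 0.

Record HilbertSpace := mkHilbert {
  hcar :> Type;
  hzero : hcar;
  hadd : hcar -> hcar -> hcar;
  hopp : hcar -> hcar;
  hscal : R -> hcar -> hcar;
  hinner : hcar -> hcar -> R;
  hadd_assoc : forall x y z, hadd x (hadd y z) = hadd (hadd x y) z;
  hadd_comm : forall x y, hadd x y = hadd y x;
  hadd_0 : forall x, hadd x hzero = x;
  hadd_opp : forall x, hadd x (hopp x) = hzero;
  hscal_1 : forall x, hscal 1 x = x;
  hscal_assoc : forall a b x, hscal a (hscal b x) = hscal (a * b) x;
  hscal_distr_l : forall a x y, hscal a (hadd x y) = hadd (hscal a x) (hscal a y);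
  hscal_distr_r : forall a b x, hscal (a + b) x = hadd (hscal a x) (hscal b x);
  hinner_sym : forall x y, hinner x y = hinner y x;
  hinner_add_l : forall x y z, hinner (hadd x y) z = hinner x z + hinner y z;
  hinner_scal_l : forall a x y, hinner (hscal a x) y = a * hinner x y;
  hinner_pos : forall x, 0 <= hinner x x;
  hinner_def : forall x, hinner x x = 0 -> x = hzero;
  hcomplete : forall s : nat -> hcar,
    (forall eps, 0 < eps -> exists N, forall m n, (N <= m)%nat -> (N <= n)%nat ->
       sqrt (hinner (hadd (s m) (hopp (s n))) (hadd (s m) (hopp (s n)))) < eps) ->
    exists l, forall eps, 0 < eps -> exists N, forall n, (N <= n)%nat ->
       sqrt (hinner (hadd (s n) (hopp l)) (hadd (s n) (hopp l))) < eps
}.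

Arguments hzero {_}. Arguments hadd {_}. Arguments hopp {_}.
Arguments hscal {_}. Arguments hinner {_}.

Definition hsub {H : HilbertSpace} (x y : H) : H := hadd x (hopp y).
Definition hnorm {H : HilbertSpace} (x : H) : R := sqrt (hinner x x).

Section Ops.
Context {H : HilbertSpace} (K : seqR -> H) (f : H).

(** K : l^2 -> H bounded linear (only its values on l^2 matter). *)
Definition bounded_linear_l2 : Prop :=
  (forall u v, in_l2 u -> in_l2 v -> K (sadd u v) = hadd (K u) (K v)) /\
  (forall a u, in_l2 u -> K (sscal a u) = hscal a (K u)) /\
  (exists C, forall u, in_l2 u -> hnorm (K u) <= C * l2norm u).

Definition injective_l2 : Prop :=
  forall u v, in_l2 u -> in_l2 v -> K u = K v -> u = v.

(** Hilbert adjoint K^* : H -> l^2, in coordinates: (K^* h)_k = <K e_k, h>. *)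
Definition adj (h : H) : seqR := fun k => hinner (K (unitv k)) h.

Definition sgn (x : R) : R :=
  if Rlt_dec 0 x then 1 else if Rlt_dec x 0 then -1 else 0.
Definition soft (v u : seqR) : seqR :=
  fun k => Rmax 0 (Rabs (u k) - v k) * sgn (u k).

Definition penalty_finite (w u : seqR) : Prop :=
  ex_series (fun k => w k * Rabs (u k)).
Definition Psi (w u : seqR) : R :=
  / 2 * (hnorm (hsub (K u) f)) ^ 2 + Series (fun k => w k * Rabs (u k)).

(** ub minimizes Psi over l^2 (Psi = +oo where the penalty series diverges). *)
Definition is_minimizer (w ub : seqR) : Prop :=
  in_l2 ub /\ penalty_finite w ub /\
  forall u, in_l2 u -> penalty_finite w u -> Psi w ub <= Psi w u.

Definition fwd (gamma : R) (u : seqR) : seqR :=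
  fun k => u k - gamma * adj (hsub (K u) f) k.

Definition Fmap (gamma : R) (w u : seqR) : seqR :=
  ssub u (soft (sscal gamma w) (fwd gamma u)).

Definition active (gamma : R) (w u : seqR) (k : nat) : Prop :=
  Rabs (fwd gamma u k) > gamma * w k.

Definition Gop (gamma : R) (w u : seqR) (v : seqR) : seqR :=
  fun k => if Rlt_dec (gamma * w k) (Rabs (fwd gamma u k))
           then gamma * adj (K v) k
           else v k.
End Ops.

(** T is invertible as a bounded operator on l^2: maps l^2 into l^2,
    is onto l^2, and is bounded below (so its inverse is bounded). *)
Definition invertible_l2 (T : seqR -> seqR) : Prop :=
  (forall v, in_l2 v -> in_l2 (T v)) /\
  (forall v, in_l2 v -> exists u, in_l2 u /\ T u = v) /\
  (exists C, 0 < C /\ forall v, in_l2 v -> l2norm v <= C * l2norm (T v)).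

(* Main.v *)
Require Import Defs.
From Stdlib Require Import Reals.
From Coquelicot Require Import Coquelicot.
From Stdlib Require Import Lra Lia FunctionalExtensionality.
Open Scope R_scope.

Section HS.
Variable H : HilbertSpace.
Implicit Types x y z : H.

Lemma hscal_0 x : hscal 0 x = hzero.
Proof.
  set (x0 := hscal 0 x).
  assert (E : hadd x0 x0 = x0) by (unfold x0; rewrite <- hscal_distr_r; f_equal; lra).
  rewrite <- (hadd_opp H x0). rewrite <- E at 2.
  rewrite <- hadd_assoc, hadd_opp, hadd_0. reflexivity.
Qed.

Lemma hopp_scal x : hopp x = hscal (-1) x.
Proof.
  rewrite <- (hadd_0 H (hscal (-1) x)). rewrite <- (hadd_opp H x).
  rewrite hadd_assoc. rewrite <- (hscal_1 H x) at 3.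
  rewrite <- hscal_distr_r. replace (-1+1) with 0 by lra. rewrite hscal_0.
  rewrite hadd_comm, hadd_0. reflexivity.
Qed.

Lemma hinner_add_r x y z : hinner x (hadd y z) = hinner x y + hinner x z.
Proof. rewrite hinner_sym, hinner_add_l, (hinner_sym _ y), (hinner_sym _ z). auto. Qed.
Lemma hinner_scal_r a x y : hinner x (hscal a y) = a * hinner x y.
Proof. rewrite hinner_sym, hinner_scal_l, hinner_sym. auto. Qed.
Lemma hinner_opp_l x y : hinner (hopp x) y = - hinner x y.
Proof. rewrite hopp_scal, hinner_scal_l. ring. Qed.
Lemma hinner_opp_r x y : hinner x (hopp y) = - hinner x y.
Proof. rewrite hopp_scal, hinner_scal_r. ring. Qed.
Lemma hinner_zero_l y : hinner hzero y = 0.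
Proof. rewrite <- (hscal_0 y), hinner_scal_l. ring. Qed.
Lemma hinner_zero_r y : hinner y hzero = 0.
Proof. rewrite hinner_sym. apply hinner_zero_l. Qed.

Lemma hnorm_sq x : hnorm x ^ 2 = hinner x x.
Proof. unfold hnorm. rewrite pow2_sqrt; auto. apply hinner_pos. Qed.
Lemma hnorm_pos x : 0 <= hnorm x.
Proof. apply sqrt_pos. Qed.

Lemma discr a b c : 0 <= c -> (forall t, 0 <= a + 2 * b * t + c * t ^ 2) -> b ^ 2 <= a * c.
Proof.
  intros Hc Ht. destruct (Rle_lt_or_eq_dec 0 c Hc) as [Hc'|Hc'].
  - specialize (Ht (- b / c)).
    assert (E: a + 2 * b * (- b / c) + c * (- b / c) ^ 2 = (a * c - b^2) / c) by (field; lra).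
    rewrite E in Ht. apply Rmult_le_compat_r with (r := c) in Ht; [|lra].
    unfold Rdiv in Ht. rewrite Rmult_assoc, Rinv_l in Ht; lra.
  - subst c. destruct (Req_dec b 0) as [->|Hb]. { specialize (Ht 0). nra. }
    specialize (Ht (- (Rabs a + 1) / (2 * b))).
    assert (E: a + 2 * b * (- (Rabs a + 1) / (2 * b)) + 0 * (- (Rabs a + 1) / (2 * b)) ^ 2 = a - (Rabs a + 1)) by (field; lra).
    rewrite E in Ht. pose proof (Rle_abs a). lra.
Qed.

Lemma cauchy_schwarz x y : Rabs (hinner x y) <= hnorm x * hnorm y.
Proof.
  assert (H2 : (hinner x y) ^ 2 <= hinner x x * hinner y y).
  { apply discr. apply hinner_pos. intro t.
    pose proof (hinner_pos H (hadd x (hscal t y))) as P.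
    rewrite hinner_add_l, !hinner_add_r, !hinner_scal_l, !hinner_scal_r in P.
    rewrite (hinner_sym _ y x) in P. nra. }
  rewrite <- (sqrt_pow2 (Rabs _)) by apply Rabs_pos.
  unfold hnorm. rewrite <- sqrt_mult by apply hinner_pos.
  apply sqrt_le_1_alt. rewrite <- Rsqr_pow2, <- Rsqr_abs, Rsqr_pow2. exact H2.
Qed.
End HS.


Fixpoint fsum (g : nat -> R) (n : nat) : R :=
  match n with O => 0 | S m => fsum g m + g m end.

Lemma fsum_ext g h n : (forall j, (j < n)%nat -> g j = h j) -> fsum g n = fsum h n.
Proof. induction n; simpl; intros; auto. rewrite IHn by (intros; apply H; lia). rewrite H by lia; auto. Qed.

Lemma fsum_zero g n : (forall j, (j < n)%nat -> g j = 0) -> fsum g n = 0.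
Proof. induction n; simpl; intros; auto. rewrite IHn by (intros; apply H; lia). rewrite H by lia; lra. Qed.

Lemma fsum_single g n j : (j < n)%nat -> (forall m, m <> j -> g m = 0) -> fsum g n = g j.
Proof.
  induction n; simpl; intros Hj Hz. lia.
  destruct (Nat.eq_dec j n) as [->|Hne].
  - assert (fsum g n = 0) as ->. { apply fsum_zero. intros; apply Hz; lia. } lra.
  - rewrite IHn; [ | lia | exact Hz]. rewrite (Hz n) by congruence. lra.
Qed.

Lemma fsum_plus g h n : fsum (fun j => g j + h j) n = fsum g n + fsum h n.
Proof. induction n; simpl; [lra|]. rewrite IHn; lra. Qed.
Lemma fsum_scal c g n : fsum (fun j => c * g j) n = c * fsum g n.
Proof. induction n; simpl; [lra|]. rewrite IHn; lra. Qed.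

Lemma fsum_nonneg g n : (forall j, 0 <= g j) -> 0 <= fsum g n.
Proof. induction n; simpl; intros; [lra|]. specialize (IHn H). specialize (H n). lra. Qed.

Lemma fsum_ge_term g n j : (forall j, 0 <= g j) -> (j < n)%nat -> g j <= fsum g n.
Proof.
  induction n; simpl; intros Hp Hj. lia.
  destruct (Nat.eq_dec j n) as [->|Hne].
  - pose proof (fsum_nonneg g n Hp). lra.
  - specialize (IHn Hp ltac:(lia)). specialize (Hp n). lra.
Qed.

Lemma fsum_le_const g n X : (forall j, (j < n)%nat -> g j <= X) -> fsum g n <= INR n * X.
Proof.
  induction n; intros Hb. simpl; lra.
  change (fsum g (S n)) with (fsum g n + g n). rewrite S_INR. specialize (IHn ltac:(intros; apply Hb; lia)). specialize (Hb n ltac:(lia)). lra.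
Qed.

Lemma fsum_abs g n : Rabs (fsum g n) <= fsum (fun j => Rabs (g j)) n.
Proof. induction n; simpl. rewrite Rabs_R0; lra. eapply Rle_trans. apply Rabs_triang. lra. Qed.

Lemma fsum_stable a n : (forall j, (n <= j)%nat -> a j = 0) ->
  forall m, (n <= m)%nat -> fsum a m = fsum a n.
Proof.
  intros Hz m Hm. induction Hm; auto. simpl. rewrite IHHm, Hz by lia. lra.
Qed.

Lemma sum_n_fsum a m : sum_n a m = fsum a (S m).
Proof.
  induction m. rewrite sum_O. simpl. lra.
  rewrite sum_Sn, IHm. simpl. reflexivity.
Qed.

Lemma is_series_fin a n : (forall j, (n <= j)%nat -> a j = 0) -> is_series a (fsum a n).
Proof.
  intros Hz. unfold is_series.
  apply filterlim_ext_loc with (f := fun _ => fsum a n); [|apply filterlim_const].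
  exists n. intros m Hm. rewrite sum_n_fsum. symmetry. apply fsum_stable; auto.
Qed.

Lemma Series_fin a n : (forall j, (n <= j)%nat -> a j = 0) -> Series a = fsum a n.
Proof. intros; apply is_series_unique, is_series_fin; auto. Qed.
Lemma ex_series_fin a n : (forall j, (n <= j)%nat -> a j = 0) -> ex_series a.
Proof. intros; eexists; apply is_series_fin; eauto. Qed.

Lemma ex_series_tail (a b : nat -> R) n : ex_series a -> (forall j, (n <= j)%nat -> b j = a j) -> ex_series b.
Proof.
  intros Ha Hb. apply (ex_series_incr_n b n). apply (ex_series_incr_n a n) in Ha.
  revert Ha. apply ex_series_ext. intros; rewrite Hb by lia; auto.
Qed.

Lemma ex_series_le_R (a b : nat -> R) : (forall j, Rabs (a j) <= b j) -> ex_series b -> ex_series a.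
Proof. intros Hab Hb. apply (@ex_series_le R_AbsRing R_CompleteNormedModule a b); auto. Qed.

Lemma ex_series_plus_R (a b : nat -> R) : ex_series a -> ex_series b -> ex_series (fun j => a j + b j).
Proof. intros; apply (ex_series_plus a b); auto. Qed.

Lemma ex_series_scal_R c (a : nat -> R) : ex_series a -> ex_series (fun j => c * a j).
Proof. intros Ha. apply (ex_series_scal_l (V:=R_NormedModule) c a) in Ha. exact Ha. Qed.

Lemma in_l2_tail u v n : in_l2 u -> (forall j, (n <= j)%nat -> v j = u j) -> in_l2 v.
Proof. intros Hu Hv. eapply ex_series_tail. exact Hu. intros j Hj; rewrite Hv by exact Hj; auto. Qed.

Lemma in_l2_fin v n : (forall j, (n <= j)%nat -> v j = 0) -> in_l2 v.
Proof. intros Hv. eapply ex_series_fin with n. intros; rewrite Hv by auto; ring. Qed.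

Lemma in_l2_le u v : in_l2 u -> (forall j, v j ^ 2 <= u j ^ 2) -> in_l2 v.
Proof.
  intros Hu Hv. eapply ex_series_le_R; [|exact Hu]. intros j. specialize (Hv j).
  rewrite Rabs_pos_eq by nra. auto.
Qed.

Lemma in_l2_sadd u v : in_l2 u -> in_l2 v -> in_l2 (sadd u v).
Proof.
  intros Hu Hv. eapply ex_series_le_R with (b := fun j => 2 * u j ^ 2 + 2 * v j ^ 2).
  - intros j. unfold sadd. pose proof (pow2_ge_0 (u j - v j)). pose proof (pow2_ge_0 (u j + v j)). rewrite Rabs_pos_eq by lra. nra.
  - apply ex_series_plus_R; apply ex_series_scal_R; auto.
Qed.

Lemma in_l2_sscal a u : in_l2 u -> in_l2 (sscal a u).
Proof.
  intros Hu. eapply ex_series_ext with (a := fun j => (a^2) * (u j ^ 2)).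
  intros; unfold sscal; simpl. ring.
  apply ex_series_scal_R; auto.
Qed.

Lemma ssub_sadd u v : ssub u v = sadd u (sscal (-1) v).
Proof. apply functional_extensionality; intro; unfold ssub, sadd, sscal; ring. Qed.

Lemma in_l2_ssub u v : in_l2 u -> in_l2 v -> in_l2 (ssub u v).
Proof. intros; rewrite ssub_sadd. apply in_l2_sadd; auto. apply in_l2_sscal; auto. Qed.

Lemma in_l2_unitv k : in_l2 (unitv k).
Proof. apply in_l2_fin with (S k). intros; unfold unitv; destruct Nat.eq_dec; auto; lia. Qed.

Lemma Series_nonneg a : (forall j, 0 <= a j) -> ex_series a -> 0 <= Series a.
Proof.
  intros Ha E. assert (Z : Series (fun _ => 0) = 0) by (rewrite (Series_fin _ 0); auto).
  rewrite <- Z.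
  apply Series_le; auto. intros; split; [lra|auto].
Qed.

Lemma sq_le_series u k : in_l2 u -> u k ^ 2 <= Series (fun j => u j ^ 2).
Proof.
  intros Hu.
  assert (E : Series (fun j => if Nat.eq_dec j k then u k ^ 2 else 0) = u k ^ 2).
  { rewrite (Series_fin _ (S k)).
    - rewrite (fsum_single _ _ k); [|lia|]. destruct Nat.eq_dec; congruence.
      intros m Hm; destruct Nat.eq_dec; congruence.
    - intros j Hj; destruct Nat.eq_dec; [lia|auto]. }
  rewrite <- E. apply Series_le; auto. intros j. destruct Nat.eq_dec; [subst|]; split; try lra.
  apply pow2_ge_0. apply pow2_ge_0.
Qed.

Lemma coord_le u k : in_l2 u -> Rabs (u k) <= l2norm u.
Proof.
  intros Hu. unfold l2norm. rewrite <- (sqrt_pow2 (Rabs (u k))) by apply Rabs_pos.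
  apply sqrt_le_1_alt. rewrite <- Rsqr_pow2, <- Rsqr_abs, Rsqr_pow2. apply sq_le_series; auto.
Qed.

Lemma l2norm_zero_seq : l2norm (fun _ => 0) = 0.
Proof. unfold l2norm. rewrite (Series_fin _ 0); simpl; auto using sqrt_0. intros; ring. Qed.

Lemma l2norm_nonneg u : 0 <= l2norm u.
Proof. apply sqrt_pos. Qed.

Lemma fsum_le_mono g h n : (forall j, (j < n)%nat -> g j <= h j) -> fsum g n <= fsum h n.
Proof. induction n; simpl; intros; [lra|]. specialize (IHn ltac:(intros; apply H; lia)). specialize (H n ltac:(lia)). lra. Qed.

Lemma fin_choice_min (Q : nat -> R -> Prop) n :
  (forall k, (k < n)%nat -> exists d, 0 < d /\ Q k d) ->
  (forall k d d', 0 < d' <= d -> Q k d -> Q k d') ->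
  exists d, 0 < d /\ forall k, (k < n)%nat -> Q k d.
Proof.
  intros Hex Hmon. induction n.
  - exists 1. split; [lra|]. intros; lia.
  - destruct IHn as [d [Hd Hq]]. intros; apply Hex; lia.
    destruct (Hex n ltac:(lia)) as [d' [Hd' Hq']].
    exists (Rmin d d'). split. apply Rmin_glb_lt; auto.
    intros k Hk. destruct (Nat.eq_dec k n) as [->|Hne].
    + eapply Hmon; [|exact Hq']. split. apply Rmin_glb_lt; auto. apply Rmin_r.
    + eapply Hmon; [|apply Hq; lia]. split. apply Rmin_glb_lt; auto. apply Rmin_l.
Qed.

Lemma fin_choice_max (Q : nat -> R -> Prop) n :
  (forall k, (k < n)%nat -> exists M, 0 <= M /\ Q k M) ->
  (forall k M M', M <= M' -> Q k M -> Q k M') ->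
  exists M, 0 <= M /\ forall k, (k < n)%nat -> Q k M.
Proof.
  intros Hex Hmon. induction n.
  - exists 0. split; [lra|]. intros; lia.
  - destruct IHn as [d [Hd Hq]]. intros; apply Hex; lia.
    destruct (Hex n ltac:(lia)) as [d' [Hd' Hq']].
    exists (Rmax d d'). split. apply Rle_trans with d; auto; apply Rmax_l.
    intros k Hk. destruct (Nat.eq_dec k n) as [->|Hne].
    + eapply Hmon; [|exact Hq']. apply Rmax_r.
    + eapply Hmon; [|apply Hq; lia]. apply Rmax_l.
Qed.


Section KS.
Variable H : HilbertSpace.
Variable K : seqR -> H.
Hypothesis Kadd : forall u v, in_l2 u -> in_l2 v -> K (sadd u v) = hadd (K u) (K v).
Hypothesis Kscal : forall a u, in_l2 u -> K (sscal a u) = hscal a (K u).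
Hypothesis Kinj : injective_l2 K.

Lemma K_zero : K (fun _ => 0) = hzero.
Proof.
  assert (E : (fun _ : nat => 0) = sscal 0 (fun _ => 0)) by
    (apply functional_extensionality; intros; unfold sscal; ring).
  rewrite E, Kscal. apply hscal_0. apply in_l2_fin with O. auto.
Qed.

Lemma K_ssub u v : in_l2 u -> in_l2 v -> K (ssub u v) = hadd (K u) (hscal (-1) (K v)).
Proof. intros. rewrite ssub_sadd, Kadd, Kscal; auto. apply in_l2_sscal; auto. Qed.

Lemma inner_Kssub x u v : in_l2 u -> in_l2 v -> hinner x (K (ssub u v)) = hinner x (K u) - hinner x (K v).
Proof. intros. rewrite K_ssub by auto. rewrite hinner_add_r, hinner_scal_r. ring. Qed.

Lemma inner_expand n : forall c, (forall j, (n <= j)%nat -> c j = 0) -> forall y,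
  hinner (K c) y = fsum (fun j => c j * hinner (K (unitv j)) y) n.
Proof.
  induction n; intros c Hc y.
  - assert (E : c = fun _ => 0) by (apply functional_extensionality; intros; apply Hc; lia).
    rewrite E, K_zero. simpl. apply hinner_zero_l.
  - set (c' := fun j => if Nat.eq_dec j n then 0 else c j).
    assert (E : c = sadd c' (sscal (c n) (unitv n))).
    { apply functional_extensionality; intro j. unfold sadd, sscal, unitv, c'.
      destruct Nat.eq_dec; [subst; ring|ring]. }
    assert (Hc' : forall j, (n <= j)%nat -> c' j = 0).
    { intros j Hj. unfold c'. destruct Nat.eq_dec; auto. apply Hc; lia. }
    rewrite E at 1. rewrite Kadd, Kscal, hinner_add_l, hinner_scal_l.
    2: apply in_l2_unitv. 2: eapply in_l2_fin; eauto. 2: apply in_l2_sscal, in_l2_unitv.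
    rewrite (IHn c' Hc'). simpl. f_equal.
    apply fsum_ext. intros j Hj. unfold c'. destruct Nat.eq_dec; [lia|auto].
Qed.

Definition supp (n : nat) (P : nat -> bool) (c : seqR) : Prop :=
  forall j, (n <= j)%nat \/ P j = false -> c j = 0.

Lemma supp_l2 n P c : supp n P c -> in_l2 c.
Proof. intros Hs. apply in_l2_fin with n. intros; apply Hs; auto. Qed.

Lemma gs_exists (P : nat -> bool) n : forall b : seqR, exists c, supp n P c /\
  forall k, (k < n)%nat -> P k = true -> hinner (K (unitv k)) (K c) = b k.
Proof.
  induction n; intros b.
  - exists (fun _ => 0). split. intros j _; auto. intros; lia.
  - destruct (P n) eqn:Pn.
    2:{ destruct (IHn b) as [c [Hs Hc]]. exists c. split.
        - intros j [Hj|Hj]; apply Hs; auto. left; lia.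
        - intros k Hk Pk. destruct (Nat.eq_dec k n); [subst; congruence|]. apply Hc; auto; lia. }
    destruct (IHn b) as [c0 [Hs0 Hc0]].
    destruct (IHn (fun k => hinner (K (unitv k)) (K (unitv n)))) as [cz [Hsz Hcz]].
    set (e := ssub (unitv n) cz).
    assert (Hcz_l2 : in_l2 cz) by (eapply supp_l2; eauto).
    assert (He_l2 : in_l2 e) by (apply in_l2_ssub; auto using in_l2_unitv).
    set (q := K e).
    assert (F1 : forall k, (k < n)%nat -> P k = true -> hinner (K (unitv k)) q = 0).
    { intros k Hk Pk. unfold q, e. rewrite inner_Kssub by auto using in_l2_unitv.
      rewrite Hcz by auto. ring. }
    assert (Hen : e n = 1).
    { unfold e, ssub, unitv. rewrite (Hsz n) by (left; lia). destruct Nat.eq_dec; [ring|congruence]. }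
    assert (Hesupp : supp (S n) P e).
    { intros j Hj. unfold e, ssub, unitv. rewrite Hsz. destruct Nat.eq_dec; [subst|ring].
      destruct Hj; [lia|congruence]. destruct Hj; [left; lia|right; auto]. }
    assert (F2 : hinner q q = hinner (K (unitv n)) q).
    { unfold q at 1. rewrite (inner_expand (S n) e) by (intros; apply Hesupp; auto).
      simpl. rewrite fsum_zero. rewrite Hen; ring.
      intros j Hj. destruct (P j) eqn:Pj. rewrite F1 by auto; ring.
      rewrite Hesupp by auto; ring. }
    assert (F3 : hinner q q <> 0).
    { intros Z. apply hinner_def in Z. unfold q in Z. rewrite <- K_zero in Z.
      apply Kinj in Z; auto. 2: apply in_l2_fin with O; auto.
      assert (e n = 0) by (rewrite Z; auto). lra. }
    set (t := (b n - hinner (K (unitv n)) (K c0)) / hinner q q).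
    assert (Hc0_l2 : in_l2 c0) by (eapply supp_l2; eauto).
    exists (sadd c0 (sscal t e)). split.
    + intros j Hj. unfold sadd, sscal. rewrite Hesupp by auto. rewrite Hs0. ring.
      destruct Hj; [left; lia|right; auto].
    + intros k Hk Pk. rewrite Kadd, Kscal, hinner_add_r, hinner_scal_r; auto.
      2: apply in_l2_sscal; auto.
      destruct (Nat.eq_dec k n) as [->|Hne].
      * fold q. rewrite <- F2. unfold t. field. auto.
      * fold q. rewrite F1 by (auto; lia). rewrite Hc0 by (auto; lia). ring.
Qed.

End KS.


Section KD.
Variable H : HilbertSpace.
Variable K : seqR -> H.
Hypothesis Kadd : forall u v, in_l2 u -> in_l2 v -> K (sadd u v) = hadd (K u) (K v).
Hypothesis Kscal : forall a u, in_l2 u -> K (sscal a u) = hscal a (K u).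
Hypothesis Kinj : injective_l2 K.
Variable C : R.
Hypothesis Kbnd : forall u, in_l2 u -> hnorm (K u) <= C * l2norm u.

Lemma coef_bound1 (P : nat -> bool) n j : exists M, 0 <= M /\ forall p B, supp n P p -> 0 <= B ->
  (forall k, (k < n)%nat -> P k = true -> Rabs (hinner (K (unitv k)) (K p)) <= B) ->
  Rabs (p j) <= M * B.
Proof.
  destruct (Compare_dec.lt_dec j n) as [Hj|Hj]; [destruct (P j) eqn:Pj|].
  2: exists 0; split; [lra|]; intros p B Hs _ _; rewrite Hs by (right; auto); rewrite Rabs_R0; lra.
  2: exists 0; split; [lra|]; intros p B Hs _ _; rewrite Hs by (left; lia); rewrite Rabs_R0; lra.
  destruct (gs_exists H K Kadd Kscal Kinj P n (unitv j)) as [d [Hds Hd]].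
  exists (fsum (fun k => Rabs (d k)) n). split. apply fsum_nonneg; intros; apply Rabs_pos.
  intros p B Hs HB Hb.
  assert (E1 : hinner (K p) (K d) = p j).
  { rewrite (inner_expand H K Kadd Kscal n p) by (intros; apply Hs; auto).
    rewrite (fsum_single _ _ j Hj). rewrite Hd by auto. unfold unitv; destruct Nat.eq_dec; [ring|congruence].
    intros m Hm. destruct (Compare_dec.lt_dec m n) as [Hmn|Hmn].
    - destruct (P m) eqn:Pm. rewrite Hd by auto. unfold unitv; destruct Nat.eq_dec; [congruence|ring].
      rewrite Hs by auto; ring.
    - rewrite Hs by (left; lia); ring. }
  rewrite <- E1, hinner_sym.
  rewrite (inner_expand H K Kadd Kscal n d) by (intros; apply Hds; auto).
  eapply Rle_trans. apply fsum_abs. rewrite Rmult_comm.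
  rewrite <- fsum_scal. apply fsum_le_mono. intros k Hk. rewrite Rabs_mult.
  destruct (P k) eqn:Pk.
  - rewrite Rmult_comm. apply Rmult_le_compat_r. apply Rabs_pos. apply Hb; auto.
  - rewrite (Hds k) by auto. rewrite Rabs_R0. lra.
Qed.

Lemma K_bound_inner k h : in_l2 h ->
  Rabs (hinner (K (unitv k)) (K h)) <= hnorm (K (unitv k)) * (Rabs C * l2norm h).
Proof.
  intros Hh. eapply Rle_trans. apply cauchy_schwarz. apply Rmult_le_compat_l. apply hnorm_pos.
  eapply Rle_trans. apply Kbnd; auto. apply Rmult_le_compat_r. apply l2norm_nonneg. apply Rle_abs.
Qed.

Lemma inv_T (P : nat -> bool) n gamma : 0 < gamma -> (forall k, P k = true -> (k < n)%nat) ->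
  invertible_l2 (fun v k => if P k then gamma * hinner (K (unitv k)) (K v) else v k).
Proof.
  intros Hg HP.
  assert (T1 : forall v, in_l2 v -> in_l2 (fun k => if P k then gamma * hinner (K (unitv k)) (K v) else v k)).
  { intros v Hv. apply in_l2_tail with v n; auto. intros j Hj. destruct (P j) eqn:Pj; auto.
    apply HP in Pj; lia. }
  split; [exact T1|split].
  - intros v Hv. set (q := fun k => if P k then 0 else v k).
    assert (Hq : in_l2 q).
    { apply in_l2_le with v; auto. intros j; unfold q; destruct (P j); [|lra].
      rewrite pow_i by lia. apply pow2_ge_0. }
    destruct (gs_exists H K Kadd Kscal Kinj P n (fun k => v k / gamma - hinner (K (unitv k)) (K q)))
      as [p [Hps Hp]].
    assert (Hpl : in_l2 p) by (eapply supp_l2; eauto).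
    exists (sadd p q). split. apply in_l2_sadd; auto.
    apply functional_extensionality; intro k. destruct (P k) eqn:Pk.
    + rewrite Kadd, hinner_add_r, Hp by auto. field. lra.
    + unfold sadd. rewrite Hps by (right; auto). unfold q; rewrite Pk. ring.
  - destruct (fin_choice_max (fun k L => hnorm (K (unitv k)) <= L) n) as [L [HL0 HL]].
    { intros k _. exists (hnorm (K (unitv k))). split. apply hnorm_pos. lra. }
    { intros; lra. }
    destruct (fin_choice_max (fun j M => forall p B, supp n P p -> 0 <= B ->
       (forall k, (k < n)%nat -> P k = true -> Rabs (hinner (K (unitv k)) (K p)) <= B) ->
       Rabs (p j) <= M * B) n) as [M [HM0 HM]].
    { intros j _. apply coef_bound1. }
    { intros k M M' HMM Hq p B Hs HB Hb. eapply Rle_trans. apply Hq; eauto. apply Rmult_le_compat_r; auto. }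
    set (C' := Rabs C). set (D := INR n * M ^ 2 * (/ gamma + L * C') ^ 2 + 1).
    assert (HD : 1 <= D).
    { unfold D. assert (0 <= INR n * M ^ 2 * (/ gamma + L * C') ^ 2); [|lra].
      apply Rmult_le_pos. apply Rmult_le_pos. apply pos_INR. apply pow2_ge_0. apply pow2_ge_0. }
    exists (sqrt D). split. apply sqrt_lt_R0; lra.
    intros v Hv. set (b := fun k => if P k then gamma * hinner (K (unitv k)) (K v) else v k).
    assert (Hb : in_l2 b) by (apply T1; auto).
    set (q := fun k => if P k then 0 else v k).
    set (p := fun k => if P k then v k else 0).
    assert (Hq : in_l2 q).
    { apply in_l2_le with v; auto. intros j; unfold q; destruct (P j); [|lra].
      rewrite pow_i by lia. apply pow2_ge_0. }
    assert (Hps : supp n P p).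
    { intros j [Hj|Hj]; unfold p; destruct (P j) eqn:Pj; auto. apply HP in Pj; lia. congruence. }
    assert (Hpl : in_l2 p) by (eapply supp_l2; eauto).
    assert (Hvpq : v = sadd p q).
    { apply functional_extensionality; intro j; unfold sadd, p, q; destruct (P j); ring. }
    assert (Hqb : forall j, q j ^ 2 <= b j ^ 2).
    { intros j; unfold q, b; destruct (P j). rewrite pow_i by lia. apply pow2_ge_0. lra. }
    assert (Hqn : l2norm q <= l2norm b).
    { apply sqrt_le_1_alt. apply Series_le; auto. intros j; split; auto. apply pow2_ge_0. }
    set (B := (/ gamma + L * C') * l2norm b).
    assert (HC' : 0 <= C') by apply Rabs_pos.
    assert (HB0 : 0 <= B).
    { apply Rmult_le_pos. assert (0 < / gamma) by (apply Rinv_0_lt_compat; auto).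
      assert (0 <= L * C') by (apply Rmult_le_pos; auto). lra. apply l2norm_nonneg. }
    assert (HBk : forall k, (k < n)%nat -> P k = true -> Rabs (hinner (K (unitv k)) (K p)) <= B).
    { intros k Hk Pk.
      assert (Ebk : b k = gamma * (hinner (K (unitv k)) (K p) + hinner (K (unitv k)) (K q))).
      { unfold b. rewrite Pk. rewrite Hvpq at 1. rewrite Kadd, hinner_add_r; auto. }
      assert (E2 : hinner (K (unitv k)) (K p) = b k / gamma - hinner (K (unitv k)) (K q)).
      { rewrite Ebk. field. lra. }
      rewrite E2. eapply Rle_trans. apply Rabs_triang. rewrite Rabs_Ropp.
      unfold Rdiv. rewrite Rabs_mult, (Rabs_pos_eq (/ gamma)) by (left; apply Rinv_0_lt_compat; auto).
      pose proof (coord_le b k Hb) as Hbk.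
      pose proof (K_bound_inner k q Hq) as Hkq. fold C' in Hkq.
      pose proof (HL k Hk) as HLk.
      assert (Rabs (b k) * / gamma <= l2norm b * / gamma).
      { apply Rmult_le_compat_r; auto. left; apply Rinv_0_lt_compat; auto. }
      assert (hnorm (K (unitv k)) * (C' * l2norm q) <= L * (C' * l2norm b)).
      { apply Rmult_le_compat; auto. apply hnorm_pos. apply Rmult_le_pos; auto. apply l2norm_nonneg.
        apply Rmult_le_compat_l; auto. }
      unfold B. nra. }
    assert (Hpj : forall j, Rabs (p j) <= M * B).
    { intros j. destruct (Compare_dec.lt_dec j n) as [Hj|Hj].
      - apply HM; auto.
      - rewrite Hps by (left; lia). rewrite Rabs_R0. apply Rmult_le_pos; auto. }
    assert (Sv : Series (fun j => v j ^ 2) = Series (fun j => p j ^ 2) + Series (fun j => q j ^ 2)).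
    { rewrite <- Series_plus by auto. apply Series_ext. intro j. unfold p, q.
      rewrite Hvpq. unfold sadd, p, q. destruct (P j); ring. }
    assert (Sp : Series (fun j => p j ^ 2) <= INR n * (M * B) ^ 2).
    { rewrite (Series_fin _ n). apply fsum_le_const. intros j _.
      specialize (Hpj j). pose proof (Rabs_pos (p j)).
      rewrite <- (pow2_abs (p j)). apply pow_incr. lra.
      intros j Hj. rewrite Hps by (left; auto). ring. }
    assert (Sq : Series (fun j => q j ^ 2) <= Series (fun j => b j ^ 2)).
    { apply Series_le; auto. intros j; split; auto. apply pow2_ge_0. }
    assert (Sb0 : 0 <= Series (fun j => b j ^ 2)) by (apply Series_nonneg; auto; intros; apply pow2_ge_0).
    assert (Eb : l2norm b ^ 2 = Series (fun j => b j ^ 2)) by (unfold l2norm; apply pow2_sqrt; auto).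
    assert (Sv2 : Series (fun j => v j ^ 2) <= D * Series (fun j => b j ^ 2)).
    { rewrite Sv. rewrite <- Eb. rewrite <- Eb in Sq.
      assert (E : INR n * (M * B) ^ 2 = (D - 1) * l2norm b ^ 2) by (unfold D, B; ring).
      nra. }
    unfold l2norm at 1. rewrite <- (sqrt_pow2 (l2norm b)) by apply l2norm_nonneg.
    rewrite <- sqrt_mult by (lra || apply pow2_ge_0). apply sqrt_le_1_alt. rewrite Eb. auto.
Qed.
End KD.


Lemma small_pos c a delta : 0 < delta -> 0 <= a ->
  (forall s, 0 < s < delta -> 0 <= s * c + s ^ 2 * a) -> 0 <= c.
Proof.
  intros Hd Ha Hs. destruct (Rle_or_lt 0 c) as [|Hc]; auto. exfalso.
  set (s := Rmin (delta / 2) (- c / (a + 1))).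
  assert (Hs1 : 0 < s) by (apply Rmin_glb_lt; [lra| apply Rdiv_lt_0_compat; lra]).
  assert (Hs2 : s <= delta / 2) by apply Rmin_l.
  assert (Hs3 : s <= - c / (a + 1)) by apply Rmin_r.
  assert (Hs4 : s * (a + 1) <= - c).
  { apply Rmult_le_compat_r with (r := a + 1) in Hs3; [|lra].
    unfold Rdiv in Hs3. rewrite Rmult_assoc, Rinv_l in Hs3; lra. }
  specialize (Hs s ltac:(lra)). nra.
Qed.

Lemma opt_real b g w a : 0 < w -> 0 <= a ->
  (forall t, 0 <= t * g + t ^ 2 * a + w * (Rabs (b + t) - Rabs b)) ->
  (0 < b -> g = - w) /\ (b < 0 -> g = w) /\ (b = 0 -> Rabs g <= w).
Proof.
  intros Hw Ha Ht. split; [|split].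
  - intros Hb.
    assert (P1 : 0 <= g + w).
    { apply (small_pos _ a b Hb Ha). intros s Hs. specialize (Ht s).
      rewrite (Rabs_pos_eq (b + s)), (Rabs_pos_eq b) in Ht by lra. nra. }
    assert (P2 : 0 <= - (g + w)).
    { apply (small_pos _ a b Hb Ha). intros s Hs. specialize (Ht (- s)).
      rewrite (Rabs_pos_eq (b + - s)), (Rabs_pos_eq b) in Ht by lra. nra. }
    lra.
  - intros Hb.
    assert (P1 : 0 <= g - w).
    { apply (small_pos _ a (- b) ltac:(lra) Ha). intros s Hs. specialize (Ht s).
      rewrite (Rabs_left (b + s)), (Rabs_left b) in Ht by lra. nra. }
    assert (P2 : 0 <= - (g - w)).
    { apply (small_pos _ a (- b) ltac:(lra) Ha). intros s Hs. specialize (Ht (- s)).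
      rewrite (Rabs_left (b + - s)), (Rabs_left b) in Ht by lra. nra. }
    lra.
  - intros ->.
    assert (P1 : 0 <= g + w).
    { apply (small_pos _ a 1 ltac:(lra) Ha). intros s Hs. specialize (Ht s).
      rewrite Rplus_0_l, Rabs_R0, (Rabs_pos_eq s) in Ht by lra. nra. }
    assert (P2 : 0 <= - g + w).
    { apply (small_pos _ a 1 ltac:(lra) Ha). intros s Hs. specialize (Ht (- s)).
      rewrite Rplus_0_l, Rabs_R0, (Rabs_left (- s)) in Ht by lra. nra. }
    apply Rabs_le; lra.
Qed.

Lemma delta_real b g w gamma : 0 < w -> 0 < gamma ->
  (0 < b -> g = - w) /\ (b < 0 -> g = w) /\ (b = 0 -> Rabs g <= w) ->
  exists delta, 0 < delta /\ forall x, Rabs (x - (b - gamma * g)) < delta ->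
    (b <> 0 -> gamma * w < Rabs x) /\ (gamma * w < Rabs x -> g = - w * sgn x).
Proof.
  intros Hw Hg [O1 [O2 O3]].
  assert (Hgw : 0 < gamma * w) by nra.
  unfold sgn.
  destruct (Rtotal_order b 0) as [Hb|[Hb|Hb]].
  - rewrite (O2 Hb). exists (- b). split; [lra|]. intros x Hx.
    apply Rabs_def2 in Hx. destruct Hx as [Hx1 Hx2].
    assert (x < 0) by nra. rewrite Rabs_left by auto.
    split. intros; nra. intros _. destruct (Rlt_dec 0 x); [lra|]. destruct (Rlt_dec x 0); [ring|lra].
  - subst b. specialize (O3 eq_refl).
    destruct (Rlt_or_le (Rabs g) w) as [Hlt|Hge].
    + exists (gamma * w - gamma * Rabs g). split. nra. intros x Hx. split. congruence.
      intros Hx2. exfalso. pose proof (Rabs_triang_inv x (0 - gamma * g)).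
      rewrite Rminus_0_l, Rabs_Ropp, Rabs_mult, (Rabs_pos_eq gamma) in H by lra. rewrite Rminus_0_l in Hx. lra.
    + assert (Hg2 : Rabs g = w) by lra.
      exists (gamma * w). split; auto. intros x Hx. split. congruence. intros _.
      apply Rabs_def2 in Hx. destruct Hx as [Hx1 Hx2].
      destruct (Rcase_abs g) as [Hgn|Hgp].
      * rewrite Rabs_left in Hg2 by auto. assert (0 < x) by nra.
        destruct (Rlt_dec 0 x); [lra|lra].
      * rewrite Rabs_pos_eq in Hg2 by lra. assert (x < 0) by nra.
        destruct (Rlt_dec 0 x); [lra|]. destruct (Rlt_dec x 0); [lra|lra].
  - rewrite (O1 Hb). exists b. split; [lra|]. intros x Hx.
    apply Rabs_def2 in Hx. destruct Hx as [Hx1 Hx2].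
    assert (0 < x) by nra. rewrite Rabs_pos_eq by lra.
    split. intros; nra. intros _. destruct (Rlt_dec 0 x); [ring|lra].
Qed.


Lemma inner_hsub_r (H : HilbertSpace) (x y z : H) : hinner x (hsub y z) = hinner x y - hinner x z.
Proof. unfold hsub. rewrite hinner_add_r, hinner_opp_r. ring. Qed.

Lemma opt_cond (H : HilbertSpace) (K : seqR -> H) (f : H) w ub k :
  (forall u v, in_l2 u -> in_l2 v -> K (sadd u v) = hadd (K u) (K v)) ->
  (forall a u, in_l2 u -> K (sscal a u) = hscal a (K u)) ->
  is_minimizer K f w ub ->
  forall t, 0 <= t * adj K (hsub (K ub) f) k + t ^ 2 * (hinner (K (unitv k)) (K (unitv k)) / 2)
             + w k * (Rabs (ub k + t) - Rabs (ub k)).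
Proof.
  intros Kadd Kscal [Hub [Hpen Hmin]] t.
  set (u := sadd ub (sscal t (unitv k))).
  assert (Hu : in_l2 u) by (apply in_l2_sadd; auto; apply in_l2_sscal, in_l2_unitv).
  assert (Hupt : forall j, (S k <= j)%nat -> u j = ub j).
  { intros j Hj. unfold u, sadd, sscal, unitv. destruct Nat.eq_dec; [lia|ring]. }
  assert (Hpu : penalty_finite w u).
  { apply (ex_series_tail _ _ (S k) Hpen). intros j Hj. rewrite Hupt; auto. }
  specialize (Hmin u Hu Hpu). unfold Psi in Hmin.
  set (d := fun j => if Nat.eq_dec j k then w k * (Rabs (ub k + t) - Rabs (ub k)) else 0).
  assert (Sd : Series d = w k * (Rabs (ub k + t) - Rabs (ub k))).
  { rewrite (Series_fin _ (S k)). rewrite (fsum_single _ _ k). unfold d; destruct Nat.eq_dec; congruence.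
    lia. intros m Hm; unfold d; destruct Nat.eq_dec; congruence.
    intros j Hj; unfold d; destruct Nat.eq_dec; [lia|auto]. }
  assert (Su : Series (fun j => w j * Rabs (u j)) = Series (fun j => w j * Rabs (ub j)) + Series d).
  { rewrite <- Series_plus; auto. apply Series_ext. intros j. unfold u, d, sadd, sscal, unitv.
    destruct Nat.eq_dec. subst. rewrite Rmult_1_r. ring. rewrite Rmult_0_r, Rplus_0_r. ring.
    eapply ex_series_fin with (S k). intros j Hj; unfold d; destruct Nat.eq_dec; [lia|auto]. }
  rewrite Su, Sd in Hmin. rewrite !hnorm_sq in Hmin.
  unfold u in Hmin. rewrite Kadd, Kscal in Hmin; auto using in_l2_unitv.
  2: apply in_l2_sscal, in_l2_unitv.
  unfold adj. unfold hsub in *. rewrite !hopp_scal in *.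
  rewrite !hinner_add_l, !hinner_add_r, !hinner_scal_l, !hinner_scal_r in *.
  rewrite (hinner_sym _ (K ub) (K (unitv k))) in Hmin.
  rewrite (hinner_sym _ f (K (unitv k))) in Hmin.
  nra.
Qed.


Lemma abs_sgn x : Rabs x * sgn x = x.
Proof.
  unfold sgn. destruct (Rlt_dec 0 x). rewrite Rabs_pos_eq by lra; ring.
  destruct (Rlt_dec x 0). rewrite Rabs_left by lra; ring. assert (x = 0) by lra. subst; ring.
Qed.

Theorem theorem3p13 (H : HilbertSpace) (K : seqR -> H) (f : H)
  (w : seqR) (w0 gamma : R) (ub : seqR) (rho : R) (k0 : nat) :
  bounded_linear_l2 K -> injective_l2 K ->
  0 < w0 -> (forall k, w0 <= w k) -> 0 < gamma ->
  is_minimizer K f w ub ->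
  0 < rho ->
  (forall u, in_l2 u -> l2norm (ssub u ub) < rho ->
     forall k, active K f gamma w u k -> (k < k0)%nat) ->
  exists r, 0 < r <= rho /\
    forall u0, in_l2 u0 -> l2norm (ssub u0 ub) < r ->
    exists us : nat -> seqR,
      us O = u0 /\
      (forall n,
         in_l2 (us n) /\
         l2norm (ssub (us n) ub) < r /\
         invertible_l2 (Gop K f gamma w (us n)) /\
         Gop K f gamma w (us n) (ssub (us n) (us (S n))) = Fmap K f gamma w (us n)) /\
      is_lim_seq (fun n => l2norm (ssub (us n) ub)) 0 /\
      (forall eps, 0 < eps -> exists N, forall n, (N <= n)%nat ->
         l2norm (ssub (us (S n)) ub) <= eps * l2norm (ssub (us n) ub)).
Proof.
  intros Hlin Hinj Hw0 Hw Hg Hmin Hrho Hact.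
  destruct Hlin as [Kadd [Kscal [C Kbnd]]].
  pose proof Hmin as [Hub [Hpen _]].
  set (g := fun k => adj K (hsub (K ub) f) k).
  assert (Hwk : forall k, 0 < w k) by (intro k; specialize (Hw k); lra).
  assert (Hopt : forall k, (0 < ub k -> g k = - w k) /\ (ub k < 0 -> g k = w k) /\ (ub k = 0 -> Rabs (g k) <= w k)).
  { intros k. apply (opt_real _ _ _ (hinner (K (unitv k)) (K (unitv k)) / 2)); auto.
    assert (0 <= hinner (K (unitv k)) (K (unitv k))) by apply hinner_pos. lra.
    apply (opt_cond H K f w ub k Kadd Kscal Hmin). }
  assert (Hdel : forall k, exists delta, 0 < delta /\ forall x, Rabs (x - fwd K f gamma ub k) < delta ->
    (ub k <> 0 -> gamma * w k < Rabs x) /\ (gamma * w k < Rabs x -> g k = - w k * sgn x)).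
  { intros k. apply delta_real; auto. }
  assert (Hss0 : ssub ub ub = fun _ => 0).
  { apply functional_extensionality; intro; unfold ssub; ring. }
  assert (Hn0 : l2norm (ssub ub ub) = 0) by (rewrite Hss0; apply l2norm_zero_seq).
  assert (Hsupp : forall k, ub k <> 0 -> (k < k0)%nat).
  { intros k Hk. apply (Hact ub Hub ltac:(lra) k). unfold active.
    destruct (Hdel k) as [dl [Hdl Hd]]. apply (Hd (fwd K f gamma ub k)); auto.
    rewrite Rminus_diag, Rabs_R0; auto. }
  set (C' := Rabs C).
  assert (Hcont : forall u k, in_l2 u -> Rabs (fwd K f gamma u k - fwd K f gamma ub k) <=
     (1 + gamma * hnorm (K (unitv k)) * C') * l2norm (ssub u ub)).
  { intros u k Hu.
    assert (E : fwd K f gamma u k - fwd K f gamma ub k =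
      ssub u ub k - gamma * hinner (K (unitv k)) (K (ssub u ub))).
    { rewrite (inner_Kssub H K Kadd Kscal) by auto. unfold fwd, adj, ssub. rewrite !inner_hsub_r. ring. }
    rewrite E. eapply Rle_trans. apply Rabs_triang. rewrite Rabs_Ropp, Rabs_mult, (Rabs_pos_eq gamma) by lra.
    pose proof (coord_le (ssub u ub) k (in_l2_ssub _ _ Hu Hub)).
    pose proof (K_bound_inner H K C Kbnd k (ssub u ub) (in_l2_ssub _ _ Hu Hub)). fold C' in H1.
    pose proof (l2norm_nonneg (ssub u ub)). pose proof (hnorm_pos _ (K (unitv k))).
    assert (0 <= C') by apply Rabs_pos. nra. }
  destruct (fin_choice_min (fun k d => forall u, in_l2 u -> l2norm (ssub u ub) < d ->
      (ub k <> 0 -> gamma * w k < Rabs (fwd K f gamma u k)) /\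
      (gamma * w k < Rabs (fwd K f gamma u k) -> g k = - w k * sgn (fwd K f gamma u k))) k0)
    as [d [Hd HQ]].
  { intros k _. destruct (Hdel k) as [dl [Hdl Hdk]].
    set (Lk := 1 + gamma * hnorm (K (unitv k)) * C').
    assert (HLk : 1 <= Lk).
    { unfold Lk. assert (0 <= gamma * hnorm (K (unitv k)) * C'); [|lra].
      apply Rmult_le_pos. apply Rmult_le_pos. lra. apply hnorm_pos. apply Rabs_pos. }
    exists (dl / Lk). split. apply Rdiv_lt_0_compat; lra.
    intros u Hu Hun. apply Hdk. eapply Rle_lt_trans. apply Hcont; auto. fold Lk.
    apply Rmult_lt_compat_l with (r := Lk) in Hun; [|lra].
    replace (Lk * (dl / Lk)) with dl in Hun by (field; lra). lra. }
  { intros k dd dd' Hdd Hq u Hu Hun. apply Hq; auto. lra. }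
  set (r := Rmin rho d).
  assert (Hr : 0 < r) by (apply Rmin_glb_lt; auto).
  assert (Hrr : r <= rho) by apply Rmin_l.
  assert (Hrd : r <= d) by apply Rmin_r.
  assert (Key : forall u, in_l2 u -> l2norm (ssub u ub) < r ->
     invertible_l2 (Gop K f gamma w u) /\ Gop K f gamma w u (ssub u ub) = Fmap K f gamma w u).
  { intros u Hu Hun. split.
    - set (P := fun k => if Rlt_dec (gamma * w k) (Rabs (fwd K f gamma u k)) then true else false).
      assert (HP : forall k, P k = true -> (k < k0)%nat).
      { intros k Pk. apply (Hact u Hu ltac:(lra) k). unfold P in Pk. unfold active.
        destruct Rlt_dec; [auto|discriminate]. }
      replace (Gop K f gamma w u) with
        (fun v k => if P k then gamma * hinner (K (unitv k)) (K v) else v k).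
      apply (inv_T H K Kadd Kscal Hinj C Kbnd P k0 gamma Hg HP).
      apply functional_extensionality; intro v; apply functional_extensionality; intro k.
      unfold Gop, P, adj. destruct Rlt_dec; auto.
    - apply functional_extensionality; intro k. unfold Gop, Fmap.
      destruct Rlt_dec as [Hk|Hk].
      + assert (Hk0 : (k < k0)%nat) by (apply (Hact u Hu ltac:(lra) k); exact Hk).
        destruct (HQ k Hk0 u Hu ltac:(lra)) as [_ Hgk]. specialize (Hgk Hk).
        unfold adj. rewrite (inner_Kssub H K Kadd Kscal) by auto. unfold ssub, soft, sscal.
        rewrite Rmax_right by lra.
        assert (E : (Rabs (fwd K f gamma u k) - gamma * w k) * sgn (fwd K f gamma u k)
                    = fwd K f gamma u k - gamma * w k * sgn (fwd K f gamma u k)).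
        { rewrite Rmult_minus_distr_r, abs_sgn. ring. }
        rewrite E. unfold g, adj in Hgk. rewrite inner_hsub_r in Hgk.
        unfold fwd, adj. rewrite inner_hsub_r.
        assert (E2 : hinner (K (unitv k)) (K ub) = hinner (K (unitv k)) f - w k * sgn
          (u k - gamma * (hinner (K (unitv k)) (K u) - hinner (K (unitv k)) f))).
        { unfold fwd, adj in Hgk. rewrite inner_hsub_r in Hgk. lra. }
        rewrite E2. ring.
      + assert (Hub0 : ub k = 0).
        { destruct (Req_dec (ub k) 0) as [|Hne]; auto. exfalso.
          destruct (HQ k (Hsupp k Hne) u Hu ltac:(lra)) as [Ha _]. apply Hk, Ha, Hne. }
        unfold ssub, soft, sscal. rewrite Rmax_left by lra. rewrite Hub0. ring. }
  exists r. split; [split; auto|].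
  intros u0 Hu0 Hn0u.
  exists (fun n => match n with O => u0 | S _ => ub end).
  split; [reflexivity|]. split; [|split].
  - intros n. destruct n.
    + destruct (Key u0 Hu0 Hn0u) as [Hinv Hstep]. split; [auto|split; [auto|split; auto]].
    + assert (Hubr : l2norm (ssub ub ub) < r) by lra.
      destruct (Key ub Hub Hubr) as [Hinv Hstep]. split; [auto|split; [auto|split; auto]].
  - apply is_lim_seq_incr_1. apply is_lim_seq_ext with (u := fun _ => 0).
    intros n. simpl. auto. apply is_lim_seq_const.
  - intros eps Heps. exists 1%nat. intros n Hn. rewrite Hn0.
    apply Rmult_le_pos; [lra|apply l2norm_nonneg].
Qed.
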